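(* For $c>0$ and $t\ge 0$ let $$l(c,t)=\begin{cases}\dfrac{t}{t+1}\log c+\dfrac t2, & c\ge 1,\\[2mm] \dfrac{ct}{2}, & 0<c\le 1,\end{cases}\qquad u(c,t)=\min\Big\{\log\Big(c+\frac{1}{4c}\Big)+\frac t2,\ \log(1+ct)+c(e^t-1)\Big\}.$$ Then for all $t>0$ and $c>0$, $$l(c,t)<\log\Big(1+2c\sinh\frac t2\Big)\le u(c,t).$$ Moreover, for $t>0$ and $c>0$, equality holds in the upper bound if and only if $c>\frac12$ and $t=2\log(2c)$. *)

(* Defs.v *)
From Stdlib Require Import Reals.
Open Scope R_scope.

(* l(c,t): case c >= 1 uses the first formula, otherwise (0<c<1) the second;
   both agree at c = 1. *)
Definition lfun (c t : R) : R :=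
  if Rle_dec 1 c then t / (t + 1) * ln c + t / 2 else c * t / 2.

Definition ufun (c t : R) : R :=
  Rmin (ln (c + 1 / (4 * c)) + t / 2) (ln (1 + c * t) + c * (exp t - 1)).

(* Main.v *)
Require Import Defs.
From Stdlib Require Import Reals Lra Psatz.
Open Scope R_scope.

Lemma ln_le' (x y : R) : 0 < x -> x <= y -> ln x <= ln y.
Proof.
  intros hx [h|h]. left; apply ln_increasing; auto. right; subst; auto.
Qed.

Lemma ln_le_sub1 (y : R) : 0 < y -> ln y <= y - 1.
Proof.
  intros hy. pose proof (exp_ineq1_le (ln y)). rewrite exp_ln in H; lra.
Qed.

Lemma concav (a y : R) : 0 <= a <= 1 -> 0 < y -> a * ln y <= ln (a * y + 1 - a).
Proof.
  intros [ha0 ha1] hy.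
  set (m := a * y + 1 - a).
  assert (hm : 0 < m).
  { unfold m. destruct ha0 as [ha|ha]. nra. subst; lra. }
  pose proof (ln_le_sub1 (y / m)) as H1.
  pose proof (ln_le_sub1 (/ m)) as H2.
  assert (Hy : 0 < y / m) by (apply Rdiv_lt_0_compat; auto).
  assert (Hi : 0 < / m) by (apply Rinv_0_lt_compat; auto).
  specialize (H1 Hy); specialize (H2 Hi).
  unfold Rdiv in H1. rewrite ln_mult in H1 by auto. rewrite ln_Rinv in H1, H2 by auto.
  assert (E : a * (y * / m - 1) + (1 - a) * (/ m - 1) = 0).
  { unfold m in *. field. lra. }
  assert (a * (ln y + - ln m) + (1 - a) * (- ln m) <= 0).
  { rewrite <- E. apply Rplus_le_compat; apply Rmult_le_compat_l; lra. }
  lra.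
Qed.

Theorem lemma3p8 (c t : R) (hc : 0 < c) (ht : 0 < t) :
  lfun c t < ln (1 + 2 * c * sinh (t / 2)) /\
  ln (1 + 2 * c * sinh (t / 2)) <= ufun c t /\
  (ln (1 + 2 * c * sinh (t / 2)) = ufun c t <-> (1 / 2 < c /\ t = 2 * ln (2 * c))).
Proof.
  set (x := exp (t / 2)).
  assert (hx1 : 1 < x).
  { unfold x. pose proof (exp_ineq1 (t/2)). lra. }
  assert (hS : 1 + 2 * c * sinh (t / 2) = 1 + c * (x - / x)).
  { unfold sinh, x. rewrite exp_Ropp. field. pose proof (exp_pos (t/2)). lra. }
  assert (hlx : ln x = t / 2) by (unfold x; apply ln_exp).
  assert (hxx : exp t = x * x).
  { unfold x. rewrite <- exp_plus. f_equal. lra. }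
  assert (hix : / x < 1). { rewrite <- Rinv_1. apply Rinv_lt_contravar; lra. }
  assert (hix0 : 0 < / x) by (apply Rinv_0_lt_compat; lra).
  assert (hxix : x * / x = 1) by (field; lra).
  assert (het : 1 + t <= x * x) by (rewrite <- hxx; apply exp_ineq1_le).
  rewrite hS.
  assert (hP : 0 < 1 + c * (x - / x)) by nra.
  set (L := ln (1 + c * (x - / x))).
  set (A := ln (c + 1 / (4 * c)) + t / 2).
  set (B := ln (1 + c * t) + c * (exp t - 1)).
  assert (hAexp : A = ln ((c + 1 / (4 * c)) * x)).
  { assert (0 < c + 1 / (4 * c)).
    { apply Rplus_lt_le_0_compat. lra. left; apply Rdiv_lt_0_compat; lra. }
    unfold A. rewrite ln_mult, hlx; lra. }
  assert (hdiff : (c + 1 / (4 * c)) * x - (1 + c * (x - / x)) = (x - 2 * c) ^ 2 / (4 * c * x)).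
  { field. lra. }
  assert (hpos : 0 <= (x - 2 * c) ^ 2 / (4 * c * x)).
  { apply Rmult_le_pos. apply pow2_ge_0. left; apply Rinv_0_lt_compat; nra. }
  assert (hLA : L <= A).
  { rewrite hAexp. apply ln_le'; auto. lra. }
  assert (hLAeq : L = A <-> (1 / 2 < c /\ t = 2 * ln (2 * c))).
  { split.
    - intros h. rewrite hAexp in h. apply ln_inv in h; try lra; try nra.
      assert (hz : (x - 2 * c) ^ 2 / (4 * c * x) = 0) by lra.
      assert (hq : (x - 2 * c) ^ 2 = 0).
      { unfold Rdiv in hz. apply Rmult_integral in hz. destruct hz as [h'|h']; auto.
        exfalso. assert (0 < / (4 * c * x)) by (apply Rinv_0_lt_compat; nra). lra. }
      assert (x = 2 * c) by nra.
      split. lra. rewrite <- H, hlx. lra.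
    - intros [h1 h2]. assert (x = 2 * c).
      { unfold x. rewrite h2. replace (2 * ln (2 * c) / 2) with (ln (2 * c)) by field.
        apply exp_ln. lra. }
      rewrite hAexp. unfold L. f_equal. rewrite H. field. lra. }
  assert (hLB : L < B).
  { unfold B. rewrite <- (ln_exp (c * (exp t - 1))). rewrite <- ln_mult.
    2: nra. 2: apply exp_pos.
    apply ln_increasing; auto.
    pose proof (exp_ineq1_le (c * (exp t - 1))) as hE.
    rewrite hxx in *.
    assert (hk : x - / x < x * x - 1).
    { assert (x * x - 1 - (x - / x) = (x - 1) * (x - 1) * (x + 1) / x) by (field; lra).
      assert (0 < (x - 1) * (x - 1) * (x + 1) / x).
      { apply Rdiv_lt_0_compat; [|lra]. apply Rmult_lt_0_compat; nra. }
      lra. }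
    assert (0 < exp (c * (x * x - 1))) by apply exp_pos.
    assert (0 <= c * t * exp (c * (x * x - 1))) by (apply Rmult_le_pos; [nra|lra]).
    assert (c * (x - / x) < c * (x * x - 1)) by (apply Rmult_lt_compat_l; lra).
    nra. }
  assert (hU : ufun c t = Rmin A B) by reflexivity.
  split; [| split].
  - unfold lfun. destruct (Rle_dec 1 c) as [h1|h1].
    + set (a := t / (t + 1)).
      assert (ha : 0 <= a <= 1).
      { unfold a. split. apply Rlt_le, Rdiv_lt_0_compat; lra.
        apply (Rmult_le_reg_r (t + 1)); [lra|]. unfold Rdiv. rewrite Rmult_assoc, Rinv_l; lra. }
      pose proof (concav a c ha hc) as hcv.
      assert (hm : 0 < a * c + 1 - a) by nra.
      apply Rle_lt_trans with (ln ((a * c + 1 - a) * x)).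
      { rewrite ln_mult, hlx by lra. lra. }
      apply ln_increasing. nra.
      assert (ea : a * (t + 1) = t) by (unfold a; field; lra).
      assert (key : (t + 1) * x * ((1 + c * (x - / x)) - (a * c + 1 - a) * x)
                    = (c - 1) * (x * x - (t + 1)) + (t + 1) * (x - 1)).
      { unfold a. field. split; lra. }
      assert (0 < (c - 1) * (x * x - (t + 1)) + (t + 1) * (x - 1)) by nra.
      assert (0 < (t + 1) * x) by nra.
      nra.
    + apply Rle_lt_trans with (ln (c * x + 1 - c)).
      { replace (c * t / 2) with (c * (t / 2)) by field. rewrite <- hlx.
        apply concav; lra. }
      apply ln_increasing. nra. nra.
  - rewrite hU. apply Rmin_glb; lra.
  - rewrite hU. rewrite <- hLAeq. unfold Rmin. destruct (Rle_dec A B); split; intros; lra.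
Qed.
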